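(* Let $N = \{1,\dots,n\}$ with $n \geq 2$, and for each $i \in N$ let $\pi_i : 2^{N \setminus\{i\}} \to \mathbb{R}_{\geq 0}$. For any directed graph $G = (N,A)$ (possibly cyclic) put $\pi^*(G) = \prod_{i} \pi_i(A_i)$ with $A_i = \{j : ji \in A\}$, and let $\pi(G) = \pi^*(G)$ if $G$ is acyclic and $\pi(G) = 0$ otherwise. Let $(q_{ij})$ be a probability distribution over ordered pairs $(i,j)$ of distinct nodes. For a DAG $G$ and ordered pair $ij$, let $G^{ij}$ be obtained from $G$ by removing arc $ij$ if $ij \in A$, by reversing arc $ji$ into $ij$ if $ji \in A$, and by adding arc $ij$ otherwise. For a DAG $G$ with $\pi(G) > 0$ define $b_{ij} = q_{ij}\min\{1, \pi^*(G^{ij})/\pi(G)\}$ and $b = \sum_{ij} b_{ij}$, and define a Markov chain on $\Omega = \{G \text{ DAG on } N : \pi(G) > 0\}$ as follows: from state $G$, with probability $1-b$ stay at $G$; with probability $b$, draw a pair $ij$ with probability $b_{ij}/b$ and move to $G^{ij}$ if $G^{ij}$ is acyclic, otherwise stay at $G$. Assume: (1) $\pi(G) > 0$ for every DAG $G$ with exactly one arc; (2) every DAG $G$ with $\pi(G) > 0$ and at least one arc has an arc whose removal yields a DAG $G'$ with $\pi(G') > 0$; (3) $q_{ij} > 0$ for all ordered pairs $ij$; (4) $q_{ij} = q_{ji}$ for all pairs. Then the chain is irreducible and aperiodic on $\Omega$, and the distribution $\pi(G)/Z$ with $Z = \sum_{G} \pi(G)$ (sum over all DAGs on $N$) is a stationary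 distribution satisfying detailed balance; consequently the chain converges to $\pi/Z$ from any initial state in $\Omega$.
   Context: A DAG is a directed acyclic graph; directed graphs here have no self-loops and at most one arc per ordered pair. Note that $b \leq \sum_{ij} q_{ij} = 1$, so the transition rule is well defined. *)

(* Defs.v *)
From HB Require Import structures.
From mathcomp Require Import all_boot all_order all_algebra.
From mathcomp Require Import all_classical all_reals all_analysis.
Set Implicit Arguments. Unset Strict Implicit. Unset Printing Implicit Defensive.
Import Order.TTheory GRing.Theory Num.Theory.
Local Open Scope ring_scope.

Section DagMCMC.
Variable (R : realType) (n : nat).

Definition darc := ('I_n * 'I_n)%type.
Definition dgraph := {set darc}.

Definition loopless (A : dgraph) : bool := [forall i : 'I_n, (i, i) \notin A].

Definition darc_rel (A : dgraph) : rel 'I_n := fun x y => (x, y) \in A.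

Definition acyclic (A : dgraph) : bool :=
  [forall a in A, ~~ connect (darc_rel A) a.2 a.1].

Definition is_dag (A : dgraph) : bool := loopless A && acyclic A.

Definition parents (A : dgraph) (i : 'I_n) : {set 'I_n} := [set j | (j, i) \in A].

Variable pi : 'I_n -> {set 'I_n} -> R.

Definition pistar (A : dgraph) : R := \prod_(i : 'I_n) pi i (parents A i).
Definition piG (A : dgraph) : R := if acyclic A then pistar A else 0.

Definition flip (A : dgraph) (i j : 'I_n) : dgraph :=
  if (i, j) \in A then A :\ (i, j)
  else if (j, i) \in A then (A :\ (j, i)) :|: [set (i, j)]
  else (i, j) |: A.

Variable q : 'I_n -> 'I_n -> R.

Definition bij (A : dgraph) (i j : 'I_n) : R :=
  q i j * Num.min 1 (pistar (flip A i j) / piG A).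

Definition btot (A : dgraph) : R := \sum_(p : darc | p.1 != p.2) bij A p.1 p.2.

Definition Omega (A : dgraph) : bool := is_dag A && (0 < piG A).

Definition trans (G H : dgraph) : R :=
  \sum_(p : darc | (p.1 != p.2) && (flip G p.1 p.2 == H) && acyclic H) bij G p.1 p.2
  + (if H == G then
       (1 - btot G) +
       \sum_(p : darc | (p.1 != p.2) && ~~ acyclic (flip G p.1 p.2)) bij G p.1 p.2
     else 0).

Fixpoint transn (t : nat) (G H : dgraph) : R :=
  match t with
  | 0 => (G == H)%:R
  | t'.+1 => \sum_(K : dgraph | Omega K) transn t' G K * trans K H
  end.

Definition irreducible : Prop :=
  forall G H, Omega G -> Omega H -> exists t, 0 < transn t G H.

Definition aperiodic : Prop :=
  forall G, Omega G -> forall d : nat,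
    (forall t : nat, (0 < t)%N -> 0 < transn t G G -> (d %| t)%N) -> d = 1%N.

Definition Zc : R := \sum_(A : dgraph | is_dag A) piG A.

End DagMCMC.

(* Main.v *)
Require Import Defs.
From HB Require Import structures.
From mathcomp Require Import all_boot all_order all_algebra.
From mathcomp Require Import all_classical all_reals all_analysis.
From mathcomp Require Import ring lra zify.
Import Order.TTheory GRing.Theory Num.Theory.
Import numFieldNormedType.Exports.
Local Open Scope classical_set_scope.
Local Open Scope ring_scope.
Section Flip.
Variable n : nat.
Implicit Types (G H : dgraph n) (i j : 'I_n) (x : darc n).

Lemma mem_flipA G i j : ((i, j) \in flip G i j) = ((i, j) \notin G).
Proof.
rewrite /flip; case: ifP => h1; first by rewrite !inE eqxx.
by case: ifP => h2; rewrite !inE ?eqxx ?orbT ?h1.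
Qed.

Lemma mem_flipB G i j x : x != (i, j) -> x != (j, i) -> (x \in flip G i j) = (x \in G).
Proof.
move=> h1 h2; rewrite /flip; case: ifP => _; first by rewrite !inE h1.
by case: ifP => _; rewrite !inE ?(negbTE h1) ?(negbTE h2) /= ?orbF ?andbT.
Qed.

Lemma mem_flipC G i j : i != j -> ((j, i) \in flip G i j) = ((j, i) \in G) && ((i, j) \in G).
Proof.
move=> ij; have hne : (j, i) != (i, j) by rewrite xpair_eqE negb_and eq_sym ij.
rewrite /flip; case: ifP => h1; first by rewrite !inE hne andbT.
case: ifP => h2; rewrite !inE ?eqxx ?(negbTE hne) ?h2 ?h1 //=.
Qed.

End Flip.
Arguments mem_flipA {n}.
Arguments mem_flipB {n}.
Arguments mem_flipC {n}.
Section Flip2.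
Variable n : nat.
Implicit Types (G H : dgraph n) (i j : 'I_n) (x : darc n).

Lemma flip_inj G i j i' j' : i != j -> i' != j' ->
  flip G i j = flip G i' j' -> (i, j) = (i', j').
Proof.
move=> ij ij' E; apply/eqP/negPn/negP => ne.
case: (eqVneq (i', j') (j, i)) => [[ei ej] | ne2]; first subst i' j'.
  have e1 := congr1 (fun S : dgraph n => (i, j) \in S) E; have e2 := congr1 (fun S : dgraph n => (j, i) \in S) E.
  move: e1 e2 => /=; rewrite mem_flipA mem_flipC 1?eq_sym // mem_flipA mem_flipC //.
  by case: ((i, j) \in G); case: ((j, i) \in G).
have e1 := congr1 (fun S : dgraph n => (i', j') \in S) E; move: e1 => /=.
rewrite mem_flipA mem_flipB // 1?eq_sym //.
by case: ((i', j') \in G).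
Qed.

Lemma noswap G i j : acyclic G -> (i, j) \in G -> (j, i) \notin G.
Proof.
move=> /forallP ac ij; apply/negP => ji.
have := ac (i, j); rewrite ij /= => /negP; apply; exact: connect1.
Qed.

Lemma flip_back G i j : acyclic G -> i != j ->
  (if (j, i) \in G then flip (flip G i j) j i else flip (flip G i j) i j) = G.
Proof.
move=> ac ij; have hne : (j, i) != (i, j) by rewrite xpair_eqE negb_and eq_sym ij.
case: ifP => ji.
  have nij : (i, j) \notin G by apply: contraTN ji => h; apply: noswap.
  rewrite {2}/flip (negbTE nij) ji /flip.
  rewrite !inE eqxx /= (negbTE hne) /=.
  rewrite ifT; last by apply/orP; right.
  apply/setP => x; rewrite !inE; case: (eqVneq x (i, j)) => [->|xn] /=.
    by rewrite eq_sym (negbTE hne) (negbTE nij).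
  by case: (eqVneq x (j, i)) => [->|] //=; rewrite ?orbT ?orbF ?andbT.
rewrite {2}/flip; case: ifP => h.
  rewrite /flip !inE eqxx /= ji andbF.
  by rewrite finset.setD1K.
rewrite ji /flip finset.setU11 finset.setU1K ?h //.
Qed.

Lemma loopless_flip G i j : loopless G -> i != j -> loopless (flip G i j).
Proof.
move=> /forallP lp ij; apply/forallP => k; apply/negP.
rewrite /flip; case: ifP => _; first by rewrite !inE (negbTE (lp k)) andbF.
case: ifP => _; rewrite !inE ?(negbTE (lp k)) ?andbF /= ?xpair_eqE.
  by move=> /andP[/eqP ki /eqP kj]; rewrite -ki -kj eqxx in ij.
by rewrite orbF => /andP[/eqP ki /eqP kj]; rewrite -ki -kj eqxx in ij.
Qed.

End Flip2.
Arguments flip_inj {n G i j i' j'}.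
Arguments noswap {n G i j}.
Arguments flip_back {n G i j}.
Arguments loopless_flip {n G i j}.
Section Main.
Variables (R : realType) (n : nat) (pi : 'I_n -> {set 'I_n} -> R) (q : 'I_n -> 'I_n -> R).
Hypothesis n2 : (2 <= n)%N.
Hypothesis pi_ge0 : forall i (S : {set 'I_n}), 0 <= pi i S.
Hypothesis q_ge0 : forall i j, 0 <= q i j.
Hypothesis q_sum : \sum_(p : darc n | p.1 != p.2) q p.1 p.2 = 1.
Hypothesis H1 : forall G : dgraph n, is_dag G -> #|G| = 1%N -> 0 < piG pi G.
Hypothesis H2 : forall G : dgraph n, is_dag G -> 0 < piG pi G -> G != finset.set0 ->
     exists2 a, a \in G & 0 < piG pi (G :\ a).
Hypothesis qpos : forall i j : 'I_n, i != j -> 0 < q i j.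
Hypothesis qsym : forall i j : 'I_n, q i j = q j i.

Local Notation Om := (Omega pi).
Local Notation P := (trans pi q).
Local Notation Pn := (transn pi q).

Lemma pistar_ge0 A : 0 <= pistar pi A.
Proof. by apply: prodr_ge0 => i _. Qed.
Lemma piG_ge0 A : 0 <= piG pi A.
Proof. by rewrite /piG; case: ifP => // _; exact: pistar_ge0. Qed.
Lemma piG_acyclic A : 0 < piG pi A -> acyclic A.
Proof. by rewrite /piG; case: ifP => //; rewrite ltxx. Qed.
Lemma piG_pistar A : acyclic A -> piG pi A = pistar pi A.
Proof. by rewrite /piG => ->. Qed.
Lemma Om_acyclic A : Om A -> acyclic A.
Proof. by case/andP => _; apply: piG_acyclic. Qed.
Lemma Om_loopless A : Om A -> loopless A.
Proof. by case/andP => /andP[]. Qed.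
Lemma Om_pos A : Om A -> 0 < piG pi A.
Proof. by case/andP. Qed.

Lemma min_ge0 (x : R) : 0 <= x -> 0 <= Num.min 1 x.
Proof. by move=> x0; rewrite le_min ler01 x0. Qed.

Lemma bij_ge0 A i j : 0 <= Defs.bij pi q A i j.
Proof.
by rewrite /Defs.bij mulr_ge0 // min_ge0 // divr_ge0 ?pistar_ge0 ?piG_ge0.
Qed.

Lemma bij_le A i j : Defs.bij pi q A i j <= q i j.
Proof.
rewrite /Defs.bij -[leRHS]mulr1 ler_wpM2l //; by rewrite ge_min lexx.
Qed.

Lemma btot_le1 A : btot pi q A <= 1.
Proof. by rewrite -q_sum /btot; apply: ler_sum => p _; apply: bij_le. Qed.

Lemma sum_ge_term (I : finType) (Pr : pred I) (F : I -> R) x :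
  (forall y, Pr y -> 0 <= F y) -> Pr x -> F x <= \sum_(y | Pr y) F y.
Proof.
move=> F0 Px; rewrite (bigD1 x) //= lerDl sumr_ge0 // => y /andP[/F0 //].
Qed.

Lemma trans_ge0 G H : 0 <= P G H.
Proof.
rewrite /trans addr_ge0 //; first by apply: sumr_ge0 => p _; apply: bij_ge0.
case: ifP => // _; rewrite addr_ge0 ?subr_ge0 ?btot_le1 //.
by apply: sumr_ge0 => p _; apply: bij_ge0.
Qed.

Lemma transn_ge0 t G H : 0 <= Pn t G H.
Proof.
elim: t H => [|t IH] H /=; first by rewrite ler0n.
by apply: sumr_ge0 => K _; rewrite mulr_ge0 ?trans_ge0.
Qed.

Lemma transn1 G H : Om G -> Pn 1 G H = P G H.
Proof.
move=> OG; rewrite /= (bigD1 G) //= eqxx mul1r big1 ?addr0 // => K /andP[_ KG].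
by rewrite eq_sym (negbTE KG) mul0r.
Qed.

Lemma transnS t G H : Pn t.+1 G H = \sum_(K | Om K) Pn t G K * P K H.
Proof. by []. Qed.

Lemma transnD s t G H : Om H -> Pn (s + t) G H = \sum_(K | Om K) Pn s G K * Pn t K H.
Proof.
elim: t H => [|t IH] H OH.
  rewrite addn0 /= (bigD1 H) //= eqxx mulr1 big1 ?addr0 // => K /andP[_ KH].
  by rewrite (negbTE KH) mulr0.
rewrite addnS !transnS.
under eq_bigr => L OL do rewrite (IH L OL) big_distrl /=.
rewrite exchange_big /=; apply: eq_bigr => K OK; rewrite big_distrr /=.
by apply: eq_bigr => L _; rewrite mulrA.
Qed.

Lemma transnD_ge s t G K H : Om K -> Om H ->
  Pn s G K * Pn t K H <= Pn (s + t) G H.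
Proof.
move=> OK OH; rewrite transnD //; apply: (@sum_ge_term _ _ (fun K => Pn s G K * Pn t K H) K) => //.
by move=> y _; rewrite mulr_ge0 ?transn_ge0.
Qed.

Lemma bij_notOm G i j : i != j -> Om G -> acyclic (flip G i j) -> ~~ Om (flip G i j) ->
  Defs.bij pi q G i j = 0.
Proof.
move=> ij OG ac; rewrite /Omega /is_dag loopless_flip ?Om_loopless // ac /= -leNgt => h.
have h0 : piG pi (flip G i j) = 0 by apply/eqP; rewrite eq_le h piG_ge0.
rewrite /Defs.bij -piG_pistar // h0 mul0r min_r ?mulr0 //.
Qed.

Lemma trans_sum G : Om G -> \sum_(K | Om K) P G K = 1.
Proof.
move=> OG; rewrite big_split /=.
rewrite (exchange_big_dep (fun p : darc n => p.1 != p.2)) /=; last first.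
  by move=> K p _ /andP[] /andP[] ->.
rewrite [X in _ + X = _](bigD1 G) //= eqxx [X in _ + (_ + X) = _]big1 ?addr0; last first.
  by move=> K /andP[_ /negbTE ->].
have -> : \sum_(p : darc n | p.1 != p.2)
   \sum_(K | Om K && ((p.1 != p.2) && (flip G p.1 p.2 == K) && acyclic K)) Defs.bij pi q G p.1 p.2
  = \sum_(p : darc n | (p.1 != p.2) && acyclic (flip G p.1 p.2)) Defs.bij pi q G p.1 p.2.
  rewrite [RHS]big_mkcondr /=; apply: eq_bigr => p pn.
  case: ifP => ac; last first.
    rewrite big_pred0 // => K; apply/negbTE/negP => /andP[_ /andP[/andP[_ /eqP E] aK]].
    by rewrite E aK in ac.
  case: (boolP (Om (flip G p.1 p.2))) => Of.
    rewrite (big_pred1 (flip G p.1 p.2)) // => K /=.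
    apply/idP/idP; first by case/andP => _ /andP[/andP[_ /eqP ->]].
    by move/eqP => ->; rewrite Of pn eqxx ac.
  rewrite big_pred0 ?bij_notOm //.
  move=> K; apply/negbTE/negP => /andP[OK /andP[/andP[_ /eqP E] aK]].
  by rewrite E OK in Of.
rewrite /btot [X in 1 - X](bigID (fun p : darc n => acyclic (flip G p.1 p.2))) /=.
ring.
Qed.

Arguments Om_acyclic {A}.
Arguments Om_pos {A}.
Arguments piG_acyclic {A}.
Arguments Om_loopless {A}.
Lemma mm (a b c : R) : 0 < a -> 0 < b -> a * (c * Num.min 1 (b / a)) = b * (c * Num.min 1 (a / b)).
Proof.
move=> a0 b0; have an : a != 0 by rewrite gt_eqF. have bn : b != 0 by rewrite gt_eqF.
case: (lerP a b) => ab.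
  rewrite (@min_l _ _ 1 (b / a)) ?ler_pdivlMr ?mul1r // min_r ?ler_pdivrMr ?mul1r //.
  by field.
rewrite (@min_l _ _ 1 (a / b)) ?ler_pdivlMr ?mul1r ?(ltW ab) // min_r ?ler_pdivrMr ?mul1r ?(ltW ab) //.
by field.
Qed.

Definition S G H := \sum_(p : darc n | (p.1 != p.2) && (flip G p.1 p.2 == H) && acyclic H)
   Defs.bij pi q G p.1 p.2.

Lemma trans_S G H : G != H -> P G H = S G H.
Proof. by move=> ne; rewrite /trans eq_sym (negbTE ne) addr0. Qed.

Lemma S_one G H i j : i != j -> flip G i j = H -> acyclic H -> S G H = Defs.bij pi q G i j.
Proof.
move=> ij E aH; rewrite /S (big_pred1 (i, j)) // => [[a b]] /=.
apply/idP/idP.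
  case/andP => /andP[ab /eqP E2] _; apply/eqP; apply: (flip_inj (G:=G) ab ij); by rewrite E E2.
by move/eqP => [-> ->]; rewrite ij E eqxx aH.
Qed.

Arguments S_one {G H i j}.

Lemma db G H : Om G -> Om H -> piG pi G * P G H = piG pi H * P H G.
Proof.
move=> OG OH; case: (eqVneq G H) => [->//|ne].
rewrite !trans_S // 1?eq_sym //.
have aG := Om_acyclic OG; have aH := Om_acyclic OH.
case: (pickP (fun p : darc n => (p.1 != p.2) && (flip G p.1 p.2 == H))) => [[i j] /andP[/= ij /eqP E] | none].
  have back := flip_back aG ij; rewrite E in back.
  rewrite (S_one ij E aH); rewrite /Defs.bij.
  case: ifP back => ji back.
    rewrite (S_one _ back aG) 1?eq_sym // /Defs.bij E back -!piG_pistar // (qsym j i).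
    exact: mm (Om_pos OG) (Om_pos OH).
  rewrite (S_one ij back aG) /Defs.bij E back -!piG_pistar //.
  exact: mm (Om_pos OG) (Om_pos OH).
rewrite /S !big_pred0 ?mulr0 //.
  move=> [i j] /=; apply/negbTE/negP => /andP[/andP[ij /eqP E] _].
  have := flip_back aH ij; rewrite E; case: ifP => _ h.
    by have := none (j, i); rewrite /= h eqxx eq_sym ij.
  by have := none (i, j); rewrite /= h eqxx ij.
move=> [i j] /=; apply/negbTE/negP => /andP[/andP[ij /eqP E] _].
by have := none (i, j); rewrite /= E eqxx ij.
Qed.

Lemma single_dag i j : i != j -> is_dag (finset.set1 ((i, j) : darc n)).
Proof.
move=> ij; apply/andP; split.
  apply/forallP => k; rewrite inE xpair_eqE; apply/negP => /andP[/eqP ki /eqP kj].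
  by rewrite -ki -kj eqxx in ij.
apply/forallP => a; apply/implyP; rewrite inE => /eqP -> /=.
apply/negP => /connectP [p pth lst]; case: p pth lst => [|z p] /=.
  by move=> _ e; rewrite e eqxx in ij.
case/andP; rewrite /darc_rel inE xpair_eqE => /andP[/eqP e _].
by rewrite e eqxx in ij.
Qed.

Lemma single_Om i j : i != j -> Om (finset.set1 ((i, j) : darc n)).
Proof.
move=> ij; rewrite /Omega single_dag //=; apply: H1; first exact: single_dag.
by rewrite cards1.
Qed.

Definition i0 : 'I_n := Ordinal (leq_trans (isT : (0 < 2)%N) n2).
Definition j0 : 'I_n := Ordinal n2.
Lemma ij0 : i0 != j0. Proof. by []. Qed.

Lemma set1D1 (x : darc n) : finset.set1 x :\ x = finset.set0.
Proof. by apply/setP => y; rewrite !inE; case: eqP. Qed.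

Lemma set0_dag : is_dag (finset.set0 : dgraph n).
Proof.
apply/andP; split; first by apply/forallP => k; rewrite inE.
by apply/forallP => a; rewrite inE.
Qed.

Lemma E_Om : Om finset.set0.
Proof.
have O1 := @single_Om i0 j0 ij0.
have ne : finset.set1 ((i0, j0) : darc n) != finset.set0.
  apply/set0Pn; exists (i0, j0); exact: set11.
have [a] := H2 _ (@single_dag i0 j0 ij0) (Om_pos O1) ne.
rewrite inE => /eqP ->; rewrite set1D1 => pos.
by rewrite /Omega set0_dag.
Qed.

Arguments single_Om {i j}.
Arguments single_dag {i j}.
Arguments transnD_ge s t {G} K {H}.

Lemma lt_prod (x y z : R) : 0 < x -> 0 < y -> x * y <= z -> 0 < z.
Proof. by move=> x0 y0; apply: lt_le_trans; rewrite mulr_gt0. Qed.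

Arguments lt_prod {x y z}.

Lemma step_pos G H i j : i != j -> Om G -> Om H -> flip G i j = H -> 0 < P G H.
Proof.
move=> ij OG OH E.
have ne : G != H.
  apply/negP => /eqP GH; have := mem_flipA G i j; rewrite E -GH.
  by case: ((i, j) \in G).
rewrite trans_S // (S_one ij E (Om_acyclic OH)) /Defs.bij mulr_gt0 ?qpos //.
rewrite lt_min ltr01 /= E -piG_pistar ?(Om_acyclic OH) //.
by rewrite divr_gt0 // Om_pos.
Qed.

Lemma Om_sub G a : Om G -> 0 < piG pi (G :\ a) -> Om (G :\ a).
Proof.
move=> OG pos; rewrite /Omega pos /is_dag (piG_acyclic pos) !andbT.
apply/forallP => k; rewrite inE negb_and.
by move/forallP: (Om_loopless OG) => ->; rewrite orbT.
Qed.

Arguments Om_sub {G a}.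
Arguments step_pos {G H i j}.

Lemma down G : Om G -> 0 < Pn #|G| G finset.set0 /\ 0 < Pn #|G| finset.set0 G.
Proof.
have [k cG] : exists k, #|G| = k by eexists.
rewrite cG; elim: k G cG => [|k IH] G cG OG.
  by move/eqP: cG; rewrite cards_eq0 => /eqP ->; split; rewrite /= eqxx ltr01.
have ne : G != finset.set0 by apply/negP => /eqP e; rewrite e cards0 in cG.
have [[i j] aG pos] := H2 _ (andP OG).1 (Om_pos OG) ne.
have OG' := Om_sub OG pos.
have ij : i != j.
  apply/negP => /eqP e; move/forallP: (Om_loopless OG) => /(_ i); rewrite e in aG *; by rewrite aG.
have cG' : #|G :\ (i, j)| = k by rewrite (cardsD1 (i, j)) aG in cG; case: cG.
have [d u] := IH _ cG' OG'.
have f1 : flip G i j = G :\ (i, j) by rewrite /flip aG.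
have f2 : flip (G :\ (i, j)) i j = G.
  have nji : (j, i) \notin G by apply: noswap (Om_acyclic OG) aG.
  rewrite /flip !inE eqxx /= (negbTE nji) andbF /= finset.setD1K //.
have p1 := step_pos ij OG OG' f1; have p2 := step_pos ij OG' OG f2.
split.
  rewrite -add1n; apply: (lt_prod _ d (transnD_ge 1 k (G :\ (i, j)) OG' E_Om)).
  by rewrite transn1.
rewrite -addn1; apply: (lt_prod u _ (transnD_ge k 1 (G :\ (i, j)) OG' OG)).
by rewrite transn1.
Qed.

Arguments down {G}.
Local Notation E0 := (finset.set0 : dgraph n).
Local Notation A0 := (finset.set1 ((i0, j0) : darc n)).
Local Notation B0 := (finset.set1 ((j0, i0) : darc n)).

Lemma ji0 : j0 != i0. Proof. by rewrite eq_sym ij0. Qed.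

Lemma ret2 : 0 < Pn 2%N E0 E0.
Proof.
have OA := single_Om ij0.
have f1 : flip E0 i0 j0 = A0 by rewrite /flip !inE finset.setU0.
have f2 : flip A0 i0 j0 = E0 by rewrite /flip inE eqxx set1D1.
apply: (lt_prod _ _ (transnD_ge 1%N 1%N A0 OA E_Om)); rewrite transn1 ?E_Om //.
  exact: step_pos ij0 E_Om OA f1.
exact: step_pos ij0 OA E_Om f2.
Qed.

Lemma ret3 : 0 < Pn 3%N E0 E0.
Proof.
have OA := single_Om ij0; have OB := single_Om ji0.
have f1 : flip E0 i0 j0 = A0 by rewrite /flip !inE finset.setU0.
have f2 : flip A0 j0 i0 = B0.
  rewrite /flip !inE xpair_eqE (negbTE ji0) /= set1D1 finset.set0U //.
have f3 : flip B0 j0 i0 = E0 by rewrite /flip inE eqxx set1D1.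
apply: (lt_prod _ _ (transnD_ge 2%N 1%N B0 OB E_Om)); last first.
  by rewrite transn1 //; exact: step_pos ji0 OB E_Om f3.
apply: (lt_prod _ _ (transnD_ge 1%N 1%N A0 OA OB)); rewrite transn1 ?E_Om //.
  exact: step_pos ij0 E_Om OA f1.
exact: step_pos ji0 OA OB f2.
Qed.

Lemma retk k : (2 <= k)%N -> 0 < Pn k E0 E0.
Proof.
move=> k2; have [m ->] : exists m, k = (m + 2)%N by exists (k - 2)%N; rewrite subnK.
have : 0 < Pn (m + 2)%N E0 E0 /\ 0 < Pn (m + 3)%N E0 E0.
  elim: m => [|m [IH1 IH2]]; first by split; [exact: ret2 | exact: ret3].
  split; first by rewrite addSnnS.
  rewrite (_ : (m.+1 + 3 = (m + 2) + 2)%N); last by lia.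
  exact: (lt_prod IH1 ret2 (transnD_ge _ 2%N E0 E_Om E_Om)).
by case.
Qed.

Arguments retk {k}.
Lemma irr G H : Om G -> Om H -> 0 < Pn (#|G| + #|H|) G H.
Proof.
move=> OG OH; have [d _] := down OG; have [_ u] := down OH.
exact: (lt_prod d u (transnD_ge _ _ E0 E_Om OH)).
Qed.

Lemma path_len G H k : Om G -> Om H -> (2 <= k)%N -> 0 < Pn (#|G| + (k + #|H|)) G H.
Proof.
move=> OG OH k2; have [d _] := down OG; have [_ u] := down OH.
have h2 := lt_prod (retk k2) u (transnD_ge k _ E0 E_Om OH).
exact: (lt_prod d h2 (transnD_ge _ _ E0 E_Om OH)).
Qed.

Arguments path_len {G H k}.

Definition T := (2 * (n * n) + 2)%N.

Lemma card_le (G : dgraph n) : (#|G| <= n * n)%N.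
Proof. by apply: leq_trans (max_card _) _; rewrite card_prod card_ord. Qed.

Lemma Tpos G H : Om G -> Om H -> 0 < Pn T G H.
Proof.
move=> OG OH.
have hG := card_le G; have hH := card_le H.
have -> : T = (#|G| + ((T - #|G| - #|H|) + #|H|))%N by rewrite /T; lia.
apply: path_len => //; rewrite /T; lia.
Qed.

Lemma aper G : Om G -> forall d : nat,
    (forall t : nat, (0 < t)%N -> 0 < Pn t G G -> (d %| t)%N) -> d = 1%N.
Proof.
move=> OG d hd.
have h2 := hd _ _ (path_len OG OG (isT : (2 <= 2)%N)).
have h3 := hd _ _ (path_len OG OG (isT : (2 <= 3)%N)).
have : (d %| 1)%N.
  rewrite -(dvdn_addr 1 (h2 _)) ?addn0 //; last by rewrite addnC.
  by rewrite (_ : (_ + 1 = #|G| + (3 + #|G|))%N) ?h3 //; lia.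
by rewrite dvdn1 => /eqP.
Qed.
Lemma transn_sum t G : Om G -> \sum_(K | Om K) Pn t G K = 1.
Proof.
move=> OG; elim: t => [|t IH].
  rewrite /= (bigD1 G) //= eqxx big1 ?addr0 // => K /andP[_ KG].
  by rewrite eq_sym (negbTE KG).
under eq_bigr => K OK do rewrite transnS.
rewrite exchange_big /= -[RHS]IH; apply: eq_bigr => L OL.
by rewrite -big_distrr /= trans_sum // mulr1.
Qed.

Lemma convex (w f : dgraph n -> R) (m M : R) :
  (forall K, Om K -> 0 <= w K) -> \sum_(K | Om K) w K = 1 ->
  (forall K, Om K -> m <= f K <= M) ->
  m <= \sum_(K | Om K) w K * f K <= M.
Proof.
move=> w0 w1 hf; apply/andP; split.
  rewrite -[m]mulr1 -w1 mulr_sumr; apply: ler_sum => K OK.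
  rewrite mulrC; apply: ler_wpM2l; [exact: w0 | by case/andP: (hf K OK)].
rewrite -[M]mulr1 -w1 mulr_sumr; apply: ler_sum => K OK.
rewrite [M * _]mulrC; apply: ler_wpM2l; [exact: w0 | by case/andP: (hf K OK)].
Qed.

Lemma Zc_eq : Zc pi = \sum_(G | Om G) piG pi G.
Proof.
rewrite /Zc (bigID (fun G => 0 < piG pi G)) /= [X in _ + X]big1 ?addr0 //.
move=> G /andP[_]; rewrite -leNgt => h; apply/eqP; by rewrite eq_le h piG_ge0.
Qed.

Lemma Zc_gt0 : 0 < Zc pi.
Proof.
rewrite Zc_eq; apply: lt_le_trans (Om_pos E_Om) _.
apply: (@sum_ge_term _ _ (fun G => piG pi G) E0); [by move=> y _; apply: piG_ge0 | exact: E_Om].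
Qed.

Lemma w_sum : \sum_(G | Om G) piG pi G / Zc pi = 1.
Proof. by rewrite -mulr_suml -Zc_eq divff // gt_eqF // Zc_gt0. Qed.

Lemma w_ge0 G : 0 <= piG pi G / Zc pi.
Proof. by rewrite divr_ge0 ?piG_ge0 // ltW // Zc_gt0. Qed.

Lemma db' G H : Om G -> Om H ->
  (piG pi G / Zc pi) * P G H = (piG pi H / Zc pi) * P H G.
Proof. by move=> OG OH; rewrite mulrAC db // mulrAC. Qed.

Lemma stat H : Om H -> \sum_(G | Om G) (piG pi G / Zc pi) * P G H = piG pi H / Zc pi.
Proof.
move=> OH; under eq_bigr => G OG do rewrite db' //.
by rewrite -mulr_sumr trans_sum // mulr1.
Qed.

Lemma stat_t t H : Om H -> \sum_(G | Om G) (piG pi G / Zc pi) * Pn t G H = piG pi H / Zc pi.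
Proof.
elim: t H => [|t IH] H OH.
  rewrite (bigD1 H) //= eqxx mulr1 big1 ?addr0 // => G /andP[_ GH].
  by rewrite (negbTE GH) mulr0.
under eq_bigr => G OG do rewrite transnS big_distrr /=.
rewrite exchange_big /= -[RHS](stat H OH); apply: eq_bigr => K OK.
by rewrite -(IH K OK) big_distrl /=; apply: eq_bigr => G _; rewrite mulrA.
Qed.

Lemma fin_min (X : finType) (Pr : pred X) (g : X -> R) :
  (forall x, Pr x -> 0 < g x) -> exists e, 0 < e /\ forall x, Pr x -> e <= g x.
Proof.
move=> gp.
suff [e [e0 h]] : exists e, 0 < e /\ forall x, x \in enum X -> Pr x -> e <= g x.
  by exists e; split => // x; apply: h; rewrite mem_enum.
elim: (enum X) => [|y s [e [e0 h]]]; first by exists 1; split.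
case: (boolP (Pr y)) => Py.
  exists (Num.min e (g y)); split; first by rewrite lt_min e0 gp.
  move=> x; rewrite inE => /orP[/eqP -> _ | xs Px]; first by rewrite ge_min lexx orbT.
  by rewrite ge_min h.
exists e; split => // x; rewrite inE => /orP[/eqP -> Px | xs Px]; last exact: h.
by rewrite Px in Py.
Qed.

Lemma conv G0 H : Om G0 -> Om H ->
  Pn t G0 H @[t --> \oo] --> piG pi H / Zc pi.
Proof.
move=> OG0 OH.
have [e [e0 he]] := @fin_min _ (fun a : dgraph n * dgraph n => Om a.1 && Om a.2)
   (fun a => Pn T a.1 a.2) (fun a ha => Tpos _ _ (andP ha).1 (andP ha).2).
have he' G K : Om G -> Om K -> e <= Pn T G K.
  by move=> OG OK; apply: (he (G, K)); rewrite /= OG OK.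
pose c := \sum_(K | Om K) e.
have c0 : 0 < c.
  refine (lt_le_trans e0 _); apply: (@sum_ge_term _ _ (fun _ => e) E0); [by move=> *; exact: ltW e0 | exact: E_Om].
have c1 : c <= 1.
  rewrite -(transn_sum T _ E_Om); apply: ler_sum => K OK; exact: he' _ _ E_Om OK.
pose rho := 1 - c.
have r0 : 0 <= rho by rewrite subr_ge0.
have r1 : rho < 1 by rewrite /rho ltrBlDr ltrDl.
have step t m M : (forall K, Om K -> m <= Pn t K H <= M) -> exists m' M',
    M' - m' <= rho * (M - m) /\ forall G, Om G -> m' <= Pn (T + t) G H <= M'.
  move=> hK; pose S := \sum_(K | Om K) Pn t K H.
  exists (e * S + rho * m), (e * S + rho * M); split.
    by rewrite (_ : _ - _ = rho * (M - m)) //; ring.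
  move=> G OG; rewrite transnD //.
  have -> : \sum_(K | Om K) Pn T G K * Pn t K H =
      \sum_(K | Om K) (Pn T G K - e) * Pn t K H + e * S.
    by rewrite /S mulr_sumr -big_split /=; apply: eq_bigr => K _; ring.
  have rs : \sum_(K | Om K) (Pn T G K - e) = rho by rewrite sumrB transn_sum.
  apply/andP; split.
    rewrite [X in _ <= X]addrC lerD2l -rs mulr_suml; apply: ler_sum => K OK.
    by apply: ler_wpM2l; [rewrite subr_ge0; exact: he' _ _ OG OK | case/andP: (hK K OK)].
  rewrite [X in X <= _]addrC lerD2l -rs mulr_suml; apply: ler_sum => K OK.
  by apply: ler_wpM2l; [rewrite subr_ge0; exact: he' _ _ OG OK | case/andP: (hK K OK)].
have bnd k : exists m M, M - m <= rho ^+ k /\ forall G, Om G -> m <= Pn (k * T) G H <= M.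
  elim: k => [|k [m [M [hMm hb]]]].
    exists 0, 1; split; first by rewrite expr0 subr0.
    by move=> G _; rewrite mul0n /=; case: (G == H); rewrite ?ler01 lexx.
  have [m' [M' [h1 h2]]] := step _ _ _ hb.
  exists m', M'; split; last by rewrite mulSn.
  apply: le_trans h1 _; rewrite exprS; exact: ler_wpM2l.
apply/cvgrPdist_lt => eps eps0.
have nr : `|rho| < 1 by rewrite ger0_norm.
have := cvg_expr nr; move/cvgr_dist_lt => /(_ eps eps0) [N _ hN].
exists (N * T)%N => // t /= hNt.
have Tp : (0 < T)%N by rewrite /T addn2.
have hk : (N <= t %/ T)%N by rewrite -(mulnK N Tp) leq_div2r.
have := hN _ hk; rewrite /= sub0r normrN ger0_norm ?exprn_ge0 // => hr.
have [m [M [hMm hb]]] := bnd (t %/ T)%N.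
have hL : m <= piG pi H / Zc pi <= M.
  rewrite -(stat_t (t %/ T * T)%N H OH); apply: convex; [by move=> K _; apply: w_ge0 | exact: w_sum | exact: hb].
have hu : m <= Pn t G0 H <= M.
  rewrite (divn_eq t T) addnC transnD //; apply: convex;
    [by move=> K _; apply: transn_ge0 | exact: transn_sum | exact: hb].
case/andP: hL => hL1 hL2; case/andP: hu => hu1 hu2.
have : `|piG pi H / Zc pi - Pn t G0 H| <= M - m.
  rewrite ler_norml; apply/andP; split; lra.
move=> h; apply: le_lt_trans h _; exact: le_lt_trans hMm hr.
Qed.

Lemma main_sec :
  [/\ irreducible pi q /\ aperiodic pi q,
      0 < Zc pi /\ \sum_(G : dgraph n | Omega pi G) piG pi G / Zc pi = 1,
      (forall H : dgraph n, Omega pi H ->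
         \sum_(G : dgraph n | Omega pi G) (piG pi G / Zc pi) * trans pi q G H
         = piG pi H / Zc pi),
      (forall G H : dgraph n, Omega pi G -> Omega pi H ->
         (piG pi G / Zc pi) * trans pi q G H = (piG pi H / Zc pi) * trans pi q H G)
    & (forall G0 H : dgraph n, Omega pi G0 -> Omega pi H ->
         transn pi q t G0 H @[t --> \oo] --> piG pi H / Zc pi)].
Proof.
split.
- split; first by move=> G H OG OH; exists (#|G| + #|H|)%N; exact: irr.
  exact: aper.
- split; [exact: Zc_gt0 | exact: w_sum].
- exact: stat.
- exact: db'.
- exact: conv.
Qed.

End Main.

Theorem mainTheorem5 (R : realType) (n : nat) (pi : 'I_n -> {set 'I_n} -> R)
    (q : 'I_n -> 'I_n -> R) :
  (2 <= n)%N ->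
  (forall i (S : {set 'I_n}), 0 <= pi i S) ->
  (forall i j, 0 <= q i j) ->
  \sum_(p : darc n | p.1 != p.2) q p.1 p.2 = 1 ->
  (* (1) *)
  (forall G : dgraph n, is_dag G -> #|G| = 1%N -> 0 < piG pi G) ->
  (* (2) *)
  (forall G : dgraph n, is_dag G -> 0 < piG pi G -> G != finset.set0 ->
     exists2 a, a \in G & 0 < piG pi (G :\ a)) ->
  (* (3) *)
  (forall i j : 'I_n, i != j -> 0 < q i j) ->
  (* (4) *)
  (forall i j : 'I_n, q i j = q j i) ->
  [/\ irreducible pi q /\ aperiodic pi q,
      0 < Zc pi /\ \sum_(G : dgraph n | Omega pi G) piG pi G / Zc pi = 1,
      (forall H : dgraph n, Omega pi H ->
         \sum_(G : dgraph n | Omega pi G) (piG pi G / Zc pi) * trans pi q G H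
         = piG pi H / Zc pi),
      (forall G H : dgraph n, Omega pi G -> Omega pi H ->
         (piG pi G / Zc pi) * trans pi q G H = (piG pi H / Zc pi) * trans pi q H G)
    & (forall G0 H : dgraph n, Omega pi G0 -> Omega pi H ->
         transn pi q t G0 H @[t --> \oo] --> piG pi H / Zc pi)].
Proof.
by move=> n2 pi0 q0 qs h1 h2 qp qsy; apply: main_sec.
Qed.
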